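(* Let $\mathcal G$ be a doubly connected molecular graph and let $b_0$ be a redundant blue solid edge of $\mathcal G$. Let $b$ be a diffusive edge of $\mathcal G$ joining molecules $\mathcal M_1$ and $\mathcal M_2$, and let $\mathcal M$ be another molecule of $\mathcal G$ (distinct from $\mathcal M_1,\mathcal M_2$). Form a new graph by removing $b$ and adding two diffusive edges, $b_1$ joining $\mathcal M_1$ and $\mathcal M$ and $b_2$ joining $\mathcal M$ and $\mathcal M_2$. Then $b_0$ is still redundant in the new graph.
   Context: A molecular graph is a finite multigraph whose vertices are called molecules and each of whose edges joins two distinct molecules and is either a diffusive edge or a blue solid edge (parallel edges are allowed). A molecular graph is doubly connected if there exist two disjoint sets of edges, $\mathcal B_{black}$ consisting only of diffusive edges and $\mathcal B_{blue}$ consisting only of blue solid or diffusive edges, such that each of $\mathcal B_{black}$ and $\mathcal B_{blue}$ contains a spanning tree of the set of all molecules. A blue solid edge $e$ of a doubly connected graph is redundant if the graph obtained by deleting $e$ is still doubly connected. *)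

(* Defs.v *)
From mathcomp Require Import all_boot.
Set Implicit Arguments. Unset Strict Implicit. Unset Printing Implicit Defensive.

(* A molecular graph on the finite set of molecules V is a finite list of
   edges (parallel edges = repeated entries). *)
Definition edge (V : finType) := (V * V * bool)%type.
Definition mgraph (V : finType) := seq (edge V).

Definition e_src {V : finType} (e : edge V) : V := e.1.1.
Definition e_dst {V : finType} (e : edge V) : V := e.1.2.
Definition diffusive {V : finType} (e : edge V) : bool := e.2.
Definition blue_solid {V : finType} (e : edge V) : bool := ~~ e.2.

Definition well_formed {V : finType} (G : mgraph V) : bool :=
  all (fun e => e_src e != e_dst e) G.

Definition edge_at {V : finType} (G : mgraph V) (i : 'I_(size G)) : edge V :=
  tnth (in_tuple G) i.

Definition sub_adj {V : finType} (G : mgraph V) (S : {set 'I_(size G)}) : rel V :=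
  fun x y => [exists i in S,
    ((e_src (edge_at i) == x) && (e_dst (edge_at i) == y)) ||
    ((e_src (edge_at i) == y) && (e_dst (edge_at i) == x))].

Definition spanning_tree {V : finType} (G : mgraph V) (S : {set 'I_(size G)}) : Prop :=
  #|S| = #|V|.-1 /\ forall x y : V, connect (sub_adj S) x y.

Definition contains_spanning_tree {V : finType} (G : mgraph V)
  (B : {set 'I_(size G)}) : Prop :=
  exists T : {set 'I_(size G)}, T \subset B /\ spanning_tree T.

Definition doubly_connected {V : finType} (G : mgraph V) : Prop :=
  exists Bblack Bblue : {set 'I_(size G)},
    [disjoint Bblack & Bblue] /\
    (forall i, i \in Bblack -> diffusive (edge_at i)) /\
    (forall i, i \in Bblue -> diffusive (edge_at i) || blue_solid (edge_at i)) /\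
    contains_spanning_tree Bblack /\ contains_spanning_tree Bblue.

Definition delete_edge {V : finType} (G : mgraph V) (e : edge V) : mgraph V :=
  rem e G.

Definition redundant {V : finType} (G : mgraph V) (e : edge V) : Prop :=
  e \in G /\ blue_solid e /\ doubly_connected G /\ doubly_connected (delete_edge G e).

(* Main.v *)
Require Import Defs.
From mathcomp Require Import all_boot.
From mathcomp Require Import zify.
Set Implicit Arguments. Unset Strict Implicit. Unset Printing Implicit Defensive.

Section S.
Variable V : finType.
Implicit Types (G H : mgraph V).

Definition joins (e : edge V) (x y : V) : bool :=
  ((e_src e == x) && (e_dst e == y)) || ((e_src e == y) && (e_dst e == x)).

Lemma sub_adjE G (S : {set 'I_(size G)}) x y :
  sub_adj S x y = [exists i in S, joins (edge_at i) x y].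
Proof. by []. Qed.

Lemma sub_adj_sym G (S : {set 'I_(size G)}) : symmetric (sub_adj S).
Proof.
move=> x y; rewrite !sub_adjE; apply/existsP/existsP => -[i /andP[iS h]];
  exists i; rewrite iS /=; move: h; rewrite /joins orbC //.
Qed.

Lemma sub_adj_mono G (S S' : {set 'I_(size G)}) : S \subset S' ->
  subrel (sub_adj S) (sub_adj S').
Proof.
move=> sub x y; rewrite !sub_adjE => /existsP[i /andP[iS h]].
by apply/existsP; exists i; rewrite (subsetP sub _ iS).
Qed.

Lemma remove_edge G (T : {set 'I_(size G)}) (ib : 'I_(size G)) M1 M2 y :
  joins (edge_at ib) M1 M2 ->
  connect (sub_adj T) M1 y ->
  connect (sub_adj (T :\ ib)) y M1 || connect (sub_adj (T :\ ib)) y M2.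
Proof.
move=> jb.
have symc := sym_connect_sym (sub_adj_sym (T :\ ib)).
pose a := [pred z | connect (sub_adj (T :\ ib)) z M1 || connect (sub_adj (T :\ ib)) z M2].
suff cl : closed (sub_adj T) a.
  move=> c; have := closed_connect cl c.
  by rewrite !inE connect0 /= => <-.
move=> z w; rewrite sub_adjE => /existsP[i /andP[iT h]].
have [eib|neib] := eqVneq i ib.
  subst i; case/orP: h => /andP[/eqP <- /eqP <-];
  by case/orP: jb => /andP[/eqP -> /eqP ->]; rewrite !inE !connect0 ?orbT.
have zw : connect (sub_adj (T :\ ib)) z w.
  apply: connect1; rewrite sub_adjE; apply/existsP; exists i.
  by rewrite !inE neib iT.
rewrite !inE; apply/idP/idP => /orP[] h'.
- by apply/orP; left; apply: connect_trans h'; rewrite symc.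
- by apply/orP; right; apply: connect_trans h'; rewrite symc.
- by apply/orP; left; apply: connect_trans h'.
- by apply/orP; right; apply: connect_trans h'.
Qed.
End S.
Lemma disjI (T : finType) (A B : {set T}) :
  (forall x, x \in A -> x \in B -> False) -> [disjoint A & B].
Proof. by move=> h; apply/pred0P => x /=; apply/negbTE/andP => -[]; apply: h. Qed.

Section F.
Variable V : finType.
Variables (H : mgraph V) (b : edge V) (M1 M2 M : V).
Hypothesis bH : b \in H.

Definition G' := (M1, M, true) :: (M, M2, true) :: rem b H.
Definition kk := index b H.
Definition g (i : nat) := if i == kk then 0 else if i < kk then i.+2 else i.+1.
Definition f (i : 'I_(size H)) : 'I_(size G') := inord (g i).

Lemma sizeH : size H = (size (rem b H)).+1.
Proof. rewrite size_rem //; case: H bH => //. Qed.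

Lemma kk_lt : kk < size H.
Proof. by rewrite /kk index_mem. Qed.

Lemma g_lt (i : 'I_(size H)) : g i < (size (rem b H)).+2.
Proof.
have h1 : i < (size (rem b H)).+1 by rewrite -sizeH.
have h2 : kk < (size (rem b H)).+1 by rewrite -sizeH kk_lt.
rewrite /g; case: eqP => _; first by [].
case: (ltnP i kk) => h3 /=; [rewrite ltnS in h2; rewrite !ltnS; exact: leq_trans h3 h2 | exact: h1].
Qed.

Lemma val_f i : nat_of_ord (f i) = g i.
Proof. by rewrite /f inordK //; apply: g_lt. Qed.

Lemma f_inj : injective f.
Proof.
move=> i j /(congr1 (@nat_of_ord _)); rewrite !val_f /g => h; apply: ord_inj.
move: h; case: (eqVneq (nat_of_ord i) kk); case: (eqVneq (nat_of_ord j) kk);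
  case: (ltnP i kk); case: (ltnP j kk); lia.
Qed.

Definition ib : 'I_(size H) := Ordinal kk_lt.
Definition j1 : 'I_(size G') := inord 1.

Lemma f_ib : f ib = ord0.
Proof. by apply: ord_inj; rewrite val_f /g /= eqxx. Qed.

Lemma f_neq1 i : f i != j1.
Proof.
apply/eqP => /(congr1 (@nat_of_ord _)); rewrite val_f /j1 inordK //= /g.
case: (eqVneq (nat_of_ord i) kk); case: (ltnP i kk); lia.
Qed.

Lemma edge_ib : edge_at ib = b.
Proof. by rewrite /edge_at (tnth_nth b) /= nth_index. Qed.

Lemma edge_0 : edge_at (ord0 : 'I_(size G')) = (M1, M, true).
Proof. by rewrite /edge_at (tnth_nth b). Qed.

Lemma edge_j1 : edge_at j1 = (M, M2, true).
Proof. by rewrite /edge_at (tnth_nth b) /j1 inordK. Qed.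

Lemma edge_f i : i != ib -> edge_at (f i) = edge_at i.
Proof.
move=> nib; rewrite /edge_at !(tnth_nth b) val_f /=.
have ik : val i != kk by apply: contra nib => /eqP h; apply/eqP/val_inj.
have := ltn_ord i; have := kk_lt.
rewrite /g (negbTE ik) /G' => klt ilt.
have kle : kk <= size H by apply: ltnW.
case: (ltnP i kk) => h /=.
  rewrite remE -/kk nth_cat size_takel //.
  by rewrite h nth_take.
have ik2 : nat_of_ord i != kk := ik.
have ipos : 0 < i by lia.
rewrite -(prednK ipos) /= remE -/kk nth_cat size_takel //.
have -> : (i.-1 < kk) = false by lia.
rewrite nth_drop; congr nth; lia.
Qed.

Lemma edge_f_in (T : {set 'I_(size H)}) i : i \in T -> ib \notin T ->
  edge_at (f i) = edge_at i.
Proof. by move=> iT nT; apply: edge_f; apply: contraNneq nT => <-. Qed.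

Lemma lift_adj (T : {set 'I_(size H)}) (T' : {set 'I_(size G')}) :
  ib \notin T -> f @: T \subset T' -> subrel (sub_adj T) (sub_adj T').
Proof.
move=> nT sub x y; rewrite !sub_adjE => /existsP[i /andP[iT h]].
apply/existsP; exists (f i); rewrite (subsetP sub) ?imset_f //=.
by rewrite (edge_f_in iT nT).
Qed.

Lemma tree_transfer (T : {set 'I_(size H)}) : joins b M1 M2 -> spanning_tree T ->
  exists T' : {set 'I_(size G')}, spanning_tree T' /\
    T' \subset f @: T :|: [set j | (j == j1) && (ib \in T)].
Proof.
move=> jb [cT conT].
have [ibT|nibT] := boolP (ib \in T); last first.
  exists (f @: T); split; last by apply: subsetUl.
  split; first by rewrite card_imset //; apply: f_inj.
  move=> x y; apply: connect_sub (conT x y) => u v h; apply: connect1.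
  exact: lift_adj nibT (subxx _) u v h.
have nib : ib \notin T :\ ib by rewrite !inE eqxx.
have jb' : joins (edge_at ib) M1 M2 by rewrite edge_ib.
have key : forall j : 'I_(size G'), j \notin f @: (T :\ ib) ->
    j \in f @: T :|: [set j | (j == j1) && true] ->
    connect (sub_adj (f @: (T :\ ib) :|: [set j])) M2 M1 ->
    exists T' : {set 'I_(size G')}, spanning_tree T' /\
      T' \subset f @: T :|: [set j | (j == j1) && true].
  move=> j nj jin c21.
  pose T' := f @: (T :\ ib) :|: [set j].
  have lift : subrel (connect (sub_adj (T :\ ib))) (connect (sub_adj T')).
    apply: connect_sub => u v h; apply: connect1.
    by apply: lift_adj nib _ u v h; apply: subsetUl.
  have symc := sym_connect_sym (sub_adj_sym T').
  have cM1 : forall x, connect (sub_adj T') x M1.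
    move=> x; case/orP: (remove_edge jb' (conT M1 x)) => /lift // h.
    exact: connect_trans h c21.
  exists T'; split; first split.
  - rewrite /T' setUC cardsU1 card_imset; last by apply: f_inj.
    rewrite nj /=; rewrite (cardsD1 ib T) ibT in cT; by rewrite -cT.
  - by move=> x y; apply: connect_trans (cM1 x) _; rewrite symc.
  - apply/subsetP => u; rewrite !inE => /orP[].
      case/imsetP => i; rewrite !inE => /andP[_ iT] ->.
      by rewrite imset_f.
    by move/eqP => ->; move: jin; rewrite !inE.
have lift0 : subrel (connect (sub_adj (T :\ ib)))
    (connect (sub_adj (f @: (T :\ ib)))).
  apply: connect_sub => u v h; apply: connect1.
  exact: lift_adj nib (subxx _) u v h.
have rm := remove_edge jb' (conT M1 M).
have [hM|hM] := boolP (connect (sub_adj (T :\ ib)) M M1).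
  apply: (key j1).
  - by apply/imsetP => -[i _ /eqP]; rewrite eq_sym (negbTE (f_neq1 i)).
  - by rewrite !inE eqxx orbT.
  set T' := _ :|: _.
  have sub0 : f @: (T :\ ib) \subset T' by apply: subsetUl.
  apply: connect_trans (connect_sub _ (lift0 _ _ hM)); last first.
    by move=> u v h; apply: connect1; apply: sub_adj_mono sub0 _ _ h.
  apply: connect1; rewrite sub_adjE; apply/existsP; exists j1.
  by rewrite !inE eqxx orbT edge_j1 /joins /e_src /e_dst /= !eqxx orbT.
rewrite (negbTE hM) /= in rm.
apply: (key ord0).
- by rewrite -f_ib mem_imset //; apply: f_inj.
- by rewrite -f_ib !inE imset_f.
set T' := _ :|: _.
have sub0 : f @: (T :\ ib) \subset T' by apply: subsetUl.
have symc := sym_connect_sym (sub_adj_sym T').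
rewrite symc; apply: connect_trans (connect_sub _ (lift0 _ _ rm)); last first.
  by move=> u v h; apply: connect1; apply: sub_adj_mono sub0 _ _ h.
apply: connect1; rewrite sub_adjE; apply/existsP; exists ord0.
by rewrite !inE eqxx orbT edge_0 /joins /e_src /e_dst /= !eqxx.
Qed.

Lemma dc_step : joins b M1 M2 -> diffusive b -> doubly_connected H -> doubly_connected G'.
Proof.
move=> jb db [Bk [Bb [dis [dk [_ [[Tk [sk tk]] [Tb [sb tb]]]]]]]].
pose L (B : {set 'I_(size H)}) : {set 'I_(size G')} :=
  f @: B :|: [set j | (j == j1) && (ib \in B)].
have LS : forall T B : {set 'I_(size H)}, T \subset B -> L T \subset L B.
  move=> T B sub; apply: setUSS; first exact: imsetS.
  apply/subsetP => j; rewrite !inE => /andP[-> /=]; exact: (subsetP sub).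
exists (L Bk), (L Bb); split; last split; last split; last split.
- apply: disjI => j; rewrite !inE => /orP[/imsetP[i1 i1B ->]|/andP[/eqP -> h1]]
    /orP[/imsetP[i2 i2B e2]|/andP[/eqP e h2]].
  + have e := f_inj e2; by subst i2; rewrite (disjointFr dis i1B) in i2B.
  + by move: (f_neq1 i1); rewrite e eqxx.
  + by move: (f_neq1 i2); rewrite -e2 eqxx.
  + by rewrite (disjointFr dis h1) in h2.
- move=> j; rewrite !inE => /orP[/imsetP[i iB ->]|/andP[/eqP -> _]].
    have [->|ne] := eqVneq i ib; first by rewrite f_ib edge_0.
    by rewrite edge_f //; apply: dk.
  by rewrite edge_j1.
- by move=> i; rewrite /blue_solid orbN.
- have [T' [st sub]] := tree_transfer jb tk.
  by exists T'; split => //; apply: subset_trans sub (LS _ _ sk).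
- have [T' [st sub]] := tree_transfer jb tb.
  by exists T'; split => //; apply: subset_trans sub (LS _ _ sb).
Qed.
End F.

Lemma rem_comm (T : eqType) (x y : T) (s : seq T) : rem x (rem y s) = rem y (rem x s).
Proof.
elim: s => //= z s IH.
have [zy|zy] := eqVneq z y; have [zx|zx] := eqVneq z x.
- by subst.
- by subst; rewrite /= eqxx.
- by subst; rewrite /= eqxx.
- by rewrite /= (negbTE zy) (negbTE zx) IH.
Qed.

Theorem claimA2 (V : finType) (G : mgraph V) (b0 b : edge V) (M1 M2 M : V) :
  well_formed G ->
  doubly_connected G ->
  redundant G b0 ->
  b \in G -> diffusive b ->
  ((e_src b == M1) && (e_dst b == M2)) || ((e_src b == M2) && (e_dst b == M1)) ->
  M != M1 -> M != M2 ->
  redundant ((M1, M, true) :: (M, M2, true) :: delete_edge G b) b0.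
Proof.
move=> _ dcG [b0G [bs0 [_ dc0]]] bG db jb _ _.
have nb0b : b0 != b by apply: contraTneq bs0 => ->; rewrite /blue_solid negbK; exact: db.
have ne1 : forall u v : V, (b0 == (u, v, true)) = false.
  move=> u v; apply/negbTE; apply: contraTneq bs0 => ->; by [].
split; last split => //; last split.
- by rewrite !inE !ne1 /=; apply: rem_mem.
- exact: (@dc_step V G b M1 M2 M bG jb db dcG).
- rewrite /delete_edge /= !(eq_sym _ b0) !ne1 rem_comm.
  have bG0 : b \in rem b0 G by apply: rem_mem; rewrite // eq_sym.
  exact: (@dc_step V (rem b0 G) b M1 M2 M bG0 jb db dc0).
Qed.
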